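(* Let $\tau=(1,\tau)\sigma\in W$. For $x\in\mathbb Z_2$ define $\tau^x\in W$ recursively by $\tau^x=(\tau^{x/2},\tau^{x/2})$ if $x\in2\mathbb Z_2$ and $\tau^x=(\tau^{(x-1)/2},\tau^{(x+1)/2})\sigma$ if $x\in2\mathbb Z_2+1$, and let $T=\{\tau^x:x\in\mathbb Z_2\}$ (the closure of $\langle\tau\rangle$). For $x\in\mathbb Z_2^\times$ define $u_x\in W$ recursively by $u_x=(u_x,u_x\tau^{(x-1)/2})$, let $U=\{u_x:x\in\mathbb Z_2^\times\}$ and $A=TU$. Then $N_W(T)=A$ and $N_W(A)=A$.
   Context: $W$ is the isometry group of the binary rooted tree $\{0,1\}^*$. Elements are written $(g_0,g_1)\pi$, $\pi\in\mathrm{Sym}(\{0,1\})$, meaning $(xw)^{(g_0,g_1)\pi}=x^\pi w^{g_x}$; $\sigma$ is the transposition acting rigidly at the root. $\mathbb Z_2$ is the ring of $2$-adic integers and $\mathbb Z_2^\times$ its group of units. *)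

(* Defs.v *)
From mathcomp Require Import all_boot.
Set Implicit Arguments. Unset Strict Implicit. Unset Printing Implicit Defensive.

(* Vertices of the binary rooted tree {0,1}^* are words [seq bool]
   (false = 0, true = 1).  An element of W (isometry = automorphism of the
   rooted tree) is a bijection of words preserving length and prefixes. *)
Definition tree_map := seq bool -> seq bool.

Definition isW (f : tree_map) : Prop :=
  [/\ (forall w, size (f w) = size w),
      (forall w v, take (size w) (f (w ++ v)) = f w) & bijective f].

(* Right actions as in the paper: w^(g h) = (w^g)^h. *)
Definition mulW (g h : tree_map) : tree_map := fun w => h (g w).

(* Subsets of W are predicates, taken up to extensional equality of maps. *)
Definition tree_set := tree_map -> Prop.

(* Normalizer N_W(S) = { g in W | g^-1 S g = S }, where
   g^-1 S g = { h | exists s in S, g h = s g } (g is invertible). *)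
Definition normalizerW (S : tree_set) : tree_set := fun g =>
  isW g /\ forall h : tree_map,
    S h <-> exists s, S s /\ forall w, mulW g h w = mulW s g w.

(* x : Z2 is the 2-adic integer sum_n (x n) 2^n (binary digit stream). *)
Definition Z2 := nat -> bool.
Definition Z2_odd (x : Z2) : bool := x 0%N.
Definition Z2_half (x : Z2) : Z2 := fun n => x n.+1.
Definition Z2_succ (x : Z2) : Z2 :=
  fun n => x n (+) all x (iota 0 n).
Definition Z2_pred (x : Z2) : Z2 :=
  fun n => x n (+) all (fun k => ~~ x k) (iota 0 n).

(* tau^x = (tau^(x/2), tau^(x/2)) if x even,
   tau^x = (tau^((x-1)/2), tau^((x+1)/2)) sigma if x odd,
   with (b w)^((g0,g1) pi) = b^pi w^(g_b). *)
Fixpoint tau_act (x : Z2) (w : seq bool) : seq bool :=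
  match w with
  | [::] => [::]
  | b :: w' =>
      if ~~ Z2_odd x then b :: tau_act (Z2_half x) w'
      else (~~ b) :: tau_act (Z2_half (if b then Z2_succ x else Z2_pred x)) w'
  end.

Definition Tset : tree_set := fun t => exists x : Z2, forall w, t w = tau_act x w.

Fixpoint u_act (x : Z2) (w : seq bool) : seq bool :=
  match w with
  | [::] => [::]
  | b :: w' =>
      if b then true :: tau_act (Z2_half (Z2_pred x)) (u_act x w')
      else false :: u_act x w'
  end.

Definition Uset : tree_set :=
  fun u => exists x : Z2, Z2_odd x /\ forall w, u w = u_act x w.

Definition Aset : tree_set :=
  fun g => exists t u, Tset t /\ Uset u /\ forall w, g w = mulW t u w.

(* Main.v *)
Require Import Defs.
From mathcomp Require Import all_boot zify.
Set Implicit Arguments. Unset Strict Implicit. Unset Printing Implicit Defensive.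

Lemma eqmD d a1 b1 a2 b2 : a1 = b1 %[mod d] -> a2 = b2 %[mod d] ->
  a1 + a2 = b1 + b2 %[mod d].
Proof. by move=> H1 H2; rewrite -modnDm H1 H2 modnDm. Qed.
Lemma eqmM d a1 b1 a2 b2 : a1 = b1 %[mod d] -> a2 = b2 %[mod d] ->
  a1 * a2 = b1 * b2 %[mod d].
Proof. by move=> H1 H2; rewrite -modnMm H1 H2 modnMm. Qed.
Lemma eqm_mulP d a k : a + k * d = a %[mod d].
Proof. by rewrite addnC modnMDl. Qed.
Lemma eqm_sym d a b : a = b %[mod d] -> b = a %[mod d].
Proof. by []. Qed.
Lemma eqm_trans d a b c : a = b %[mod d] -> b = c %[mod d] -> a = c %[mod d].
Proof. by move=> ->. Qed.
Lemma eqm_modl d a : a %% d = a %[mod d].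
Proof. by rewrite modn_mod. Qed.
Lemma eqmDl d a b c : a + b = a + c %[mod d] -> b = c %[mod d].
Proof. by move/eqP; rewrite eqn_modDl => /eqP. Qed.

Fixpoint num (w : seq bool) : nat :=
  if w is b :: w' then b + 2 * num w' else 0.
Fixpoint word (n k : nat) : seq bool :=
  if n is n'.+1 then odd k :: word n' k./2 else [::].

Lemma size_word n k : size (word n k) = n.
Proof. by elim: n k => //= n IH k; rewrite IH. Qed.

Lemma num_lt w : num w < 2 ^ size w.
Proof. elim: w => //= b w IH; rewrite expnS; case: b => /=; lia. Qed.

Lemma mod2S k n : k %% 2 ^ n.+1 = odd k + 2 * (k./2 %% 2 ^ n).
Proof.
have E : k = (odd k + 2 * (k./2 %% 2 ^ n)) + (k./2 %/ 2 ^ n) * 2 ^ n.+1.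
  have := divn_eq (k./2) (2 ^ n); have := odd_double_half k.
  rewrite expnS -muln2; lia.
rewrite {1}E addnC modnMDl modn_small //.
have := ltn_pmod (k./2) (expn_gt0 2 n). rewrite expnS. case: (odd k) => /=; lia.
Qed.

Lemma num_word n k : num (word n k) = k %% 2 ^ n.
Proof.
elim: n k => [|n IH] k /=; first by rewrite modn1.
by rewrite IH mod2S.
Qed.

Lemma word_num w : word (size w) (num w) = w.
Proof.
elim: w => //= b w IH; congr (_ :: _).
  by case: b => /=; rewrite oddD oddM.
rewrite -[in RHS]IH; congr word.
case: b => /=; lia.
Qed.

Lemma word_mod n k : word n (k %% 2 ^ n) = word n k.
Proof.
elim: n k => [|n IH] k //=; rewrite mod2S; congr (_ :: _).
  by rewrite oddD oddM /= addbF; case: (odd k).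
rewrite -[in RHS]IH; congr word.
case: (odd k) => /=; lia.
Qed.

Lemma word_eqP n a b : word n a = word n b <-> a = b %[mod 2 ^ n].
Proof.
split; first by move=> E; rewrite -!num_word E.
by move=> E; rewrite -word_mod E word_mod.
Qed.

Lemma num_cat w v : num (w ++ v) = num w + 2 ^ size w * num v.
Proof. elim: w => //= [|b w ->]; rewrite ?expnS; lia. Qed.

Lemma num_inj w1 w2 : size w1 = size w2 -> num w1 = num w2 -> w1 = w2.
Proof. by move=> Hs Hn; rewrite -(word_num w1) -(word_num w2) Hs Hn. Qed.

Lemma odd_b2 (b : bool) x : odd (b + 2 * x) = b.
Proof. by rewrite oddD oddM /= addbF; case: b. Qed.
Lemma half_b2 (b : bool) x : (b + 2 * x)./2 = x.
Proof. case: b => /=; lia. Qed.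

Lemma num_take m w : num (take m w) = num w %% 2 ^ m.
Proof.
elim: w m => [|b w IH] [|m] //=; rewrite ?mod0n ?modn1 //.
by rewrite IH mod2S odd_b2 half_b2.
Qed.

Lemma word0 n : word n 0 = nseq n false.
Proof. by elim: n => //= n ->. Qed.

Fixpoint zval (n : nat) (x : Z2) : nat :=
  if n is n'.+1 then zval n' x + x n' * 2 ^ n' else 0.

Lemma val_lt n x : zval n x < 2 ^ n.
Proof. elim: n => //= n IH; rewrite expnS; case: (x n) => /=; lia. Qed.

Lemma val_half n x : zval n.+1 x = x 0 + 2 * zval n (Z2_half x).
Proof.
elim: n => [|n IH] /=; first by lia.
rewrite /= in IH; rewrite IH expnS /Z2_half; lia.
Qed.

Lemma val_ext n x y : (forall i, x i = y i) -> zval n x = zval n y.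
Proof. by move=> E; elim: n => //= n ->; rewrite E. Qed.

Lemma all_iotaS (x : Z2) i :
  all x (iota 0 i.+1) = x 0 && all (Z2_half x) (iota 0 i).
Proof. by rewrite /= -add1n iotaDl all_map. Qed.

Lemma half_succ (x : Z2) i : x 0 -> Z2_half (Z2_succ x) i = Z2_succ (Z2_half x) i.
Proof. by move=> H; rewrite /Z2_half /Z2_succ all_iotaS H. Qed.
Lemma half_succ0 (x : Z2) i : ~~ x 0 -> Z2_half (Z2_succ x) i = Z2_half x i.
Proof. by move=> H; rewrite /Z2_half /Z2_succ all_iotaS (negbTE H) addbF. Qed.
Lemma half_pred (x : Z2) i : x 0 -> Z2_half (Z2_pred x) i = Z2_half x i.
Proof.
by move=> H; rewrite /Z2_half /Z2_pred /= H /= addbF.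
Qed.

Lemma val_succ n (x : Z2) : zval n (Z2_succ x) = (zval n x).+1 %[mod 2 ^ n].
Proof.
elim: n x => [|n IH] x; first by rewrite !modn1.
rewrite !val_half.
have -> : Z2_succ x 0 = ~~ x 0 by rewrite /Z2_succ /= addbT.
case H0 : (x 0) => /=.
  rewrite (val_ext n (fun i => half_succ i H0)) expnS add0n.
  have -> : (1 + 2 * zval n (Z2_half x)).+1 = 2 * (zval n (Z2_half x)).+1 by lia.
  by rewrite -!muln_modr IH.
rewrite (val_ext n (fun i => half_succ0 i (negbT H0))); congr (_ %% _); lia.
Qed.

Lemma val_take m n x : n <= m -> zval m x %% 2 ^ n = zval n x.
Proof.
move=> /subnKC <-; elim: (m - n) => [|l IH]; first by rewrite addn0 modn_small // val_lt.
by rewrite addnS /= expnD mulnA (mulnC _ (2 ^ n)) -mulnA addnC mulnC modnMDl IH.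
Qed.

Lemma val_eqm n x : zval n.+1 x = zval n x %[mod 2 ^ n].
Proof. by rewrite val_take // modn_small // val_lt. Qed.

Lemma word_b2 n (b : bool) k : word n.+1 (b + 2 * k) = b :: word n k.
Proof. by rewrite /= odd_b2 half_b2. Qed.

Lemma tauE x w : tau_act x w = word (size w) (num w + zval (size w) x).
Proof.
elim: w x => [|b w IH] x //.
change (size (b :: w)) with (size w).+1; rewrite val_half.
change (num (b :: w)) with (b + 2 * num w).
case H0 : (x 0).
  case: b.
    have -> : tau_act x (true :: w) = false :: tau_act (Z2_half (Z2_succ x)) w.
      by rewrite /= /Z2_odd H0.
    rewrite (IH _) (val_ext _ (fun i => half_succ i H0)).
    have -> : true + 2 * num w + (true + 2 * zval (size w) (Z2_half x))
      = false + 2 * (num w + (zval (size w) (Z2_half x)).+1) by lia.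
    rewrite word_b2; congr (_ :: _); apply/word_eqP.
    by apply: eqmD => //; rewrite val_succ.
  have -> : tau_act x (false :: w) = true :: tau_act (Z2_half (Z2_pred x)) w.
    by rewrite /= /Z2_odd H0.
  rewrite (IH _) (val_ext _ (fun i => half_pred i H0)).
  have -> : false + 2 * num w + (true + 2 * zval (size w) (Z2_half x))
    = true + 2 * (num w + zval (size w) (Z2_half x)) by lia.
  by rewrite word_b2.
have -> : tau_act x (b :: w) = b :: tau_act (Z2_half x) w.
  by rewrite /= /Z2_odd H0.
rewrite IH.
have -> : b + 2 * num w + (false + 2 * zval (size w) (Z2_half x))
  = b + 2 * (num w + zval (size w) (Z2_half x)) by lia.
by rewrite word_b2.
Qed.

Lemma uE x w : Z2_odd x -> u_act x w = word (size w) (num w * zval (size w) x).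
Proof.
rewrite /Z2_odd => H0.
elim: w => [|b w IH] //.
change (size (b :: w)) with (size w).+1.
change (num (b :: w)) with (b + 2 * num w).
have Hv := val_half (size w) x; rewrite H0 in Hv.
case: b.
  have -> : u_act x (true :: w) = true :: tau_act (Z2_half (Z2_pred x)) (u_act x w) by [].
  rewrite tauE IH size_word num_word (val_ext _ (fun i => half_pred i H0)).
  have -> : (true + 2 * num w) * zval (size w).+1 x
     = true + 2 * (zval (size w) (Z2_half x) + num w * zval (size w).+1 x).
    rewrite Hv; lia.
  rewrite word_b2; congr (_ :: _); apply/word_eqP.
  rewrite addnC; apply: eqmD => //; rewrite modn_mod.
  by apply: eqmM => //; rewrite val_eqm.
have -> : u_act x (false :: w) = false :: u_act x w by [].
have -> : (false + 2 * num w) * zval (size w).+1 x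
   = false + 2 * (num w * zval (size w).+1 x) by lia.
rewrite word_b2 IH; congr (_ :: _); apply/word_eqP.
by apply: eqmM => //; rewrite val_eqm.
Qed.

Definition pref (f : tree_map) := forall w v, take (size w) (f (w ++ v)) = f w.
Definition lin (f : tree_map) (X : nat -> nat) :=
  forall n, exists D, forall k, f (word n k) = word n (X n * k + D).
Definition mkZ2 (F : nat -> nat) : Z2 := fun i => odd (F i.+1 %/ 2 ^ i).
Definition cstream (f : tree_map) : Z2 := mkZ2 (fun n => num (f (nseq n false))).

Lemma modS2 m n : m %% 2 ^ n.+1 = m %% 2 ^ n + odd (m %/ 2 ^ n) * 2 ^ n.
Proof.
set q := m %/ 2 ^ n.
have E : m = (m %% 2 ^ n + odd q * 2 ^ n) + q./2 * 2 ^ n.+1.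
  have := divn_eq m (2 ^ n); have := odd_double_half q.
  rewrite expnS -/q; lia.
rewrite {1}E addnC modnMDl modn_small //.
have := ltn_pmod m (expn_gt0 2 n). rewrite expnS. case: (odd q) => /=; lia.
Qed.

Lemma val_mkZ2 (F : nat -> nat) : (forall n : nat, F n = F n.+1 %[mod 2 ^ n]) ->
  forall n : nat, zval n (mkZ2 F) = F n %% 2 ^ n.
Proof.
move=> HF; elim=> [|n IH]; first by rewrite modn1.
by rewrite /= IH HF /mkZ2 -modS2.
Qed.

Lemma lin_word f X : lin f X -> forall w, exists D,
  f w = word (size w) (X (size w) * num w + D).
Proof. by move=> H w; have [D HD] := H (size w); exists D; rewrite -HD word_num. Qed.

Lemma lin_sz f X : lin f X -> forall w, size (f w) = size w.
Proof. by move=> H w; have [D ->] := lin_word H w; rewrite size_word. Qed.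

Lemma lin_comp f g X Y : lin f X -> lin g Y ->
  lin (fun w => f (g w)) (fun n => X n * Y n).
Proof.
move=> Hf Hg n; have [D HD] := Hf n; have [E HE] := Hg n.
by exists (X n * E + D) => k; rewrite HE HD mulnDr mulnA addnA.
Qed.

Lemma lin_eqm f X X' : (forall n, X n = X' n %[mod 2 ^ n]) -> lin f X -> lin f X'.
Proof.
move=> HX H n; have [D HD] := H n; exists D => k; rewrite HD; apply/word_eqP.
by apply: eqmD => //; apply: eqmM.
Qed.

Lemma lin_ext f f' X : (forall w, f w = f' w) -> lin f X -> lin f' X.
Proof. by move=> E H n; have [D HD] := H n; exists D => k; rewrite -E. Qed.

Lemma lin_id1 f X : lin f X -> (forall w, f w = w) -> forall n, X n = 1 %[mod 2 ^ n].
Proof.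
move=> H E n; have [D HD] := H n.
have H0 := HD 0; have H1 := HD 1; rewrite !E in H0 H1.
move/word_eqP: H0; move/word_eqP: H1; rewrite muln0 muln1 add0n => H1 H0.
by rewrite H1 -modnDmr -H0 mod0n addn0.
Qed.

Lemma lin_inj f X : (forall n, exists Y, Y * X n = 1 %[mod 2 ^ n]) -> lin f X ->
  injective f.
Proof.
move=> HX H w1 w2 E.
have Hs : size w1 = size w2 by rewrite -(lin_sz H w1) E (lin_sz H).
have [D HD] := H (size w1).
rewrite -(word_num w1) -(word_num w2) -Hs !HD in E *.
move/word_eqP/eqP: E; rewrite eqn_modDr => /eqP E.
have [Y HY] := HX (size w1).
apply/word_eqP.
rewrite -[num w1]mul1n -[num w2]mul1n -modnMml -HY modnMml -mulnA.
by rewrite -modnMmr E modnMmr mulnA -modnMml HY modnMml.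
Qed.

Lemma lin_inv g gi X Y : lin g X -> (forall n, Y n * X n = 1 %[mod 2 ^ n]) ->
  (forall w, g (gi w) = w) -> lin gi Y.
Proof.
move=> H HY E n.
have Hinj : injective g.
  by apply: (lin_inj _ H) => m; exists (Y m).
have [D HD] := H n.
exists (Y n * (2 ^ n - D %% 2 ^ n)) => k.
have HXY : X n * Y n = 1 %[mod 2 ^ n] by rewrite mulnC HY.
apply: Hinj; rewrite E HD; apply/word_eqP; apply: eqm_sym.
rewrite mulnDr !mulnA -addnA.
apply: eqm_trans (_ : 1 * k + (1 * (2 ^ n - D %% 2 ^ n) + D) = _ %[mod _]).
  by apply: eqmD; [apply: eqmM|apply: eqmD => //; apply: eqmM].
rewrite !mul1n -modnDmr -(modnDmr (2 ^ n - _)) subnK ?modnn ?addn0 //.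
by apply: ltnW; rewrite ltn_pmod // expn_gt0.
Qed.

Lemma pref_comp f g : pref f -> pref g -> (forall w, size (g w) = size w) ->
  pref (fun w => f (g w)).
Proof.
move=> Hf Hg Hs w v.
rewrite -(cat_take_drop (size w) (g (w ++ v))) Hg -{1}(Hs w).
exact: Hf.
Qed.

Lemma pref_ext f f' : (forall w, f w = f' w) -> pref f -> pref f'.
Proof. by move=> E H w v; rewrite -!E. Qed.

Lemma pref_inv f fi : pref f -> (forall w, size (f w) = size w) ->
  cancel f fi -> cancel fi f -> pref fi.
Proof.
move=> Hf Hs K1 K2 w v.
set u := fi (w ++ v).
have Hu : size u = size w + size v by rewrite -Hs /u K2 size_cat.
have Ht : size (take (size w) u) = size w by rewrite size_takel // Hu leq_addr.
have E : f (take (size w) u) = w.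
  rewrite -(Hf (take (size w) u) (drop (size w) u)) cat_take_drop Ht /u K2.
  by rewrite take_size_cat.
by rewrite -[in RHS]E K1.
Qed.

Lemma cstreamE f x : pref f -> lin f (fun n => zval n x) ->
  forall w, f w = word (size w) (zval (size w) x * num w + zval (size w) (cstream f)).
Proof.
move=> Hp Hl.
have Hc : forall n, num (f (nseq n false)) = num (f (nseq n.+1 false)) %[mod 2 ^ n].
  move=> n; have -> : nseq n.+1 false = nseq n false ++ [:: false].
    by elim: n => //= n ->.
  rewrite -(Hp (nseq n false) [:: false]) size_nseq.
  by rewrite num_take modn_mod.
move=> w; have [D HD] := Hl (size w).
rewrite -{1}(word_num w) HD; apply/word_eqP.
apply: eqmD => //.
rewrite /cstream val_mkZ2 // modn_mod -word0 HD num_word muln0 add0n.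
by rewrite modn_mod.
Qed.

Lemma pow2_gt0 n : 0 < 2 ^ n.
Proof. by rewrite expn_gt0. Qed.

Definition minv n X := let a := sval (Bezoutl X (pow2_gt0 n)) in a * a * X.

Lemma minv_spec n X : odd X -> minv n X * X = 1 %[mod 2 ^ n].
Proof.
move=> HX; rewrite /minv; case: (Bezoutl X (pow2_gt0 n)) => a _ /= Hd.
have Hg : gcdn (2 ^ n) X = 1.
  by apply/eqP; apply: coprimeXl; rewrite coprime2n.
rewrite Hg in Hd; move/dvdnP: Hd => [q Hq].
set z := a * X in Hq *.
have -> : a * a * X * X = z * z by rewrite /z; lia.
have E : z * z + (2 * q) * 2 ^ n = (q * (1 + z)) * 2 ^ n + 1.
  have E1 : (2 * q) * 2 ^ n = 2 * (1 + z) by rewrite -mulnA -Hq.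
  have E2 : (q * (1 + z)) * 2 ^ n = (1 + z) * (1 + z) by rewrite mulnAC -Hq.
  rewrite E1 E2; nia.
by rewrite -[in LHS](eqm_mulP _ _ (2 * q)) E modnMDl.
Qed.

Lemma zval_odd x n : Z2_odd x -> odd (zval n.+1 x).
Proof. by rewrite val_half /Z2_odd => ->; rewrite odd_b2. Qed.

Lemma minv_zval x n : Z2_odd x -> minv n (zval n x) * zval n x = 1 %[mod 2 ^ n].
Proof.
case: n => [|n] Hx; first by rewrite !modn1.
by apply: minv_spec; apply: zval_odd.
Qed.

Definition allw n := mkseq (word n) (2 ^ n).

Lemma mem_allw (w : seq bool) : w \in allw (size w).
Proof.
rewrite -{1}(word_num w); apply: map_f; rewrite mem_iota add0n num_lt //.
Qed.

Lemma uniq_allw n : uniq (allw n).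
Proof.
rewrite /allw /mkseq map_inj_in_uniq ?iota_uniq // => a b.
rewrite !mem_iota !add0n => Ha Hb /word_eqP.
by rewrite !modn_small.
Qed.

Lemma allw_size n (w : seq bool) : w \in allw n -> size w = n.
Proof. by move=> /mapP [k _ ->]; rewrite size_word. Qed.

Lemma bij_of_inj (f : tree_map) : (forall w, size (f w) = size w) -> injective f -> bijective f.
Proof.
move=> Hs Hi.
have Hin : forall w, w \in map f (allw (size w)).
  move=> w.
  have H1 : uniq (map f (allw (size w))) by rewrite map_inj_uniq // uniq_allw.
  have H2 : {subset map f (allw (size w)) <= allw (size w)}.
    move=> v /mapP [u Hu ->]; rewrite -(allw_size Hu) -Hs; exact: mem_allw.
  have H3 : size (allw (size w)) <= size (map f (allw (size w))) by rewrite size_map.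
  have [_ Heq] := uniq_min_size H1 H2 H3.
  by rewrite Heq mem_allw.
pose fi w := nth w (allw (size w)) (index w (map f (allw (size w)))).
have K2 : cancel fi f.
  move=> w; rewrite /fi -(nth_map w (f w)); first exact: nth_index.
  by rewrite -(size_map f) index_mem.
by exists fi => // w; apply: Hi; rewrite K2.
Qed.

Definition isTs f := pref f /\ lin f (fun _ => 1).
Definition isAs f := pref f /\ exists x, Z2_odd x /\ lin f (fun n => zval n x).

Lemma isAs_W f : isAs f -> isW f.
Proof.
move=> [Hp [x [Hx Hl]]]; split => //; first exact: lin_sz Hl.
apply: bij_of_inj; first exact: lin_sz Hl.
apply: (lin_inj _ Hl) => n; exists (minv n (zval n x)); exact: minv_zval.
Qed.

Lemma take_tau y m z : take m (tau_act y z) = tau_act y (take m z).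
Proof.
elim: z m y => [|b z IH] [|m] y /=; rewrite ?take0 //.
by case: ifP => _ /=; rewrite IH.
Qed.

Lemma tau_pref c : pref (tau_act c).
Proof.
move=> w v; elim: w c => [|b w IH] c /=; first by rewrite take0.
by case: ifP => _ /=; rewrite IH.
Qed.

Lemma u_pref x : pref (u_act x).
Proof.
move=> w v; elim: w => [|b w IH] /=; first by rewrite take0.
by case: b; rewrite /= ?take_tau IH.
Qed.

Lemma tau_lin c : lin (tau_act c) (fun _ => 1).
Proof.
move=> n; exists (zval n c) => k; rewrite tauE size_word num_word; apply/word_eqP.
by rewrite mul1n modnDml.
Qed.

Lemma u_lin x : Z2_odd x -> lin (u_act x) (fun n => zval n x).
Proof.
move=> Hx n; exists 0 => k; rewrite uE // size_word num_word; apply/word_eqP.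
by rewrite addn0 modnMml mulnC.
Qed.

Lemma tau_sz c w : size (tau_act c w) = size w.
Proof. by rewrite tauE size_word. Qed.

Definition z1 : Z2 := fun i => i == 0.

Lemma zval_z1 n : zval n z1 = 1 %[mod 2 ^ n].
Proof.
case: n => [|n]; rewrite ?modn1 // val_half.
have Z : zval n (fun _ => false) = 0 by elim: n => //= n ->.
by rewrite (@val_ext n _ (fun _ => false)) // Z.
Qed.

Lemma one_odd : Z2_odd z1. Proof. by []. Qed.

Lemma tau_linone c : lin (tau_act c) (fun n => zval n z1).
Proof. by apply: lin_eqm (tau_lin c) => n; rewrite zval_z1. Qed.

Lemma Tset_iff f : Tset f <-> isTs f.
Proof.
split.
  move=> [x Hx]; split.
    by apply: pref_ext (tau_pref x) => w; rewrite Hx.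
  by apply: lin_ext (tau_lin x) => w; rewrite Hx.
move=> [Hp Hl].
have Hl' : lin f (fun n => zval n z1) by apply: lin_eqm Hl => n; rewrite zval_z1.
exists (cstream f) => w; rewrite (cstreamE Hp Hl') tauE; apply/word_eqP.
apply: eqmD => //; rewrite -[in RHS](mul1n (num w)); apply: eqmM => //.
exact: zval_z1.
Qed.

Lemma isA_tau c : isAs (tau_act c).
Proof. split; first exact: tau_pref. by exists z1; split => //; apply: tau_linone. Qed.

Lemma isA_u x : Z2_odd x -> isAs (u_act x).
Proof. by move=> Hx; split; [apply: u_pref | exists x; split => //; apply: u_lin]. Qed.

Lemma isW_inv g : isW g -> exists gi, [/\ cancel g gi, cancel gi g & pref gi].
Proof.
move=> [Hs Hp [gi K1 K2]]; exists gi; split => //.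
exact: pref_inv Hp Hs K1 K2.
Qed.

Lemma Aset_iff f : Aset f <-> isAs f.
Proof.
split.
  move=> [t [u [[y Hy] [[x [Hx Hux]] E]]]].
  have Ef : forall w, u_act x (tau_act y w) = f w.
    by move=> w; rewrite E /mulW Hy Hux.
  split.
    exact: pref_ext Ef (pref_comp (u_pref x) (tau_pref y) (tau_sz y)).
  exists x; split => //; apply: lin_ext Ef _.
  apply: lin_eqm (lin_comp (u_lin Hx) (tau_lin y)) => n; by rewrite muln1.
move=> [Hp [x [Hx Hl]]].
have [Hus Hup [ui K1 K2]] := isAs_W (isA_u Hx).
have Hui : pref ui by apply: pref_inv Hup Hus K1 K2.
exists (fun w => ui (f w)), (u_act x); split; [|split].
- apply/Tset_iff; split; first exact: pref_comp Hui Hp (lin_sz Hl).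
  have Hl2 := lin_comp (lin_inv (u_lin Hx) (fun n => minv_zval n Hx) K2) Hl.
  by apply: lin_eqm Hl2 => n; apply: minv_zval.
- by exists x.
- by move=> w; rewrite /mulW K2.
Qed.

Lemma conj_closed g gi x h Z : Z2_odd x -> lin g (fun n => zval n x) -> pref g ->
  cancel g gi -> cancel gi g -> pref gi -> pref h -> lin h Z ->
  [/\ pref (fun w => gi (h (g w))), lin (fun w => gi (h (g w))) Z,
      pref (fun w => g (h (gi w))) & lin (fun w => g (h (gi w))) Z].
Proof.
move=> Hx Hg Hpg K1 K2 Hpgi Hph Hh.
have Hgi := lin_inv Hg (fun n => minv_zval n Hx) K2.
have Sg := lin_sz Hg; have Sgi := lin_sz Hgi; have Sh := lin_sz Hh.
split.
- apply: pref_comp Hpgi (pref_comp Hph Hpg Sg) _ => w; by rewrite Sh Sg.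
- apply: lin_eqm (lin_comp Hgi (lin_comp Hh Hg)) => n.
  rewrite mulnCA -[in RHS](muln1 (Z n)); apply: eqmM => //; exact: minv_zval.
- apply: pref_comp Hpg (pref_comp Hph Hpgi Sgi) _ => w; by rewrite Sh Sgi.
- apply: lin_eqm (lin_comp Hg (lin_comp Hh Hgi)) => n.
  rewrite mulnCA (mulnC (zval n x)) -[in RHS](muln1 (Z n)).
  apply: eqmM => //; exact: minv_zval.
Qed.

Lemma tau1_word n k : tau_act z1 (word n k) = word n k.+1.
Proof.
rewrite tauE size_word num_word; apply/word_eqP.
rewrite -(addn1 k); apply: eqmD; [exact: modn_mod | exact: zval_z1].
Qed.

Lemma lemL g h : isW g -> isTs h -> (forall w, g (tau_act z1 w) = h (g w)) -> isAs g.
Proof.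
move=> [Hs Hp [gi K1 K2]] [Hhp Hhl] E.
have Hl' : lin h (fun n => zval n z1) by apply: lin_eqm Hhl => n; rewrite zval_z1.
set x := cstream h.
have Hh := cstreamE Hhp Hl'.
have Hg : forall n k, g (word n k) = word n (zval n x * k + num (g (word n 0))).
  move=> n; elim=> [|k IH].
    by rewrite muln0 add0n -{1}(word_num (g (word n 0))) Hs size_word.
  rewrite -tau1_word E IH Hh size_word num_word; apply/word_eqP.
  rewrite mulnSr addnAC; apply: eqmD => //.
  rewrite -[in RHS](mul1n (_ + _)); apply: eqmM; first exact: zval_z1.
  by rewrite modn_mod.
have Hx : Z2_odd x.
  apply/negPn/negP => Hx0.
  have := Hg 1 1; have := Hg 1 0.
  have -> : zval 1 x = 0 by move: Hx0; rewrite /Z2_odd /=; case: (x 0).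
  rewrite !muln0 !add0n => <- /(can_inj K1) //.
split => //; exists x; split => //.
by move=> n; exists (num (g (word n 0))) => k; apply: Hg.
Qed.

Definition m1 : Z2 := fun _ => true.
Definition negw := u_act m1.
Definition taum := tau_act m1.
Definition qw w := tau_act z1 (negw (taum (negw w))).

Lemma zval_m1 n : zval n m1 = 2 ^ n - 1.
Proof.
elim: n => //= n ->; rewrite /m1 mul1n expnS.
have := pow2_gt0 n; lia.
Qed.

Lemma MM n : (2 ^ n - 1) * (2 ^ n - 1) = 1 %[mod 2 ^ n].
Proof.
case: n => [|n]; first by rewrite !modn1.
have : 2 <= 2 ^ n.+1 by rewrite expnS; have := pow2_gt0 n; lia.
move: (2 ^ n.+1) => P HP.
have -> : (P - 1) * (P - 1) = (P - 2) * P + 1 by nia.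
by rewrite modnMDl.
Qed.

Lemma negw_word n k : negw (word n k) = word n (k * (2 ^ n - 1)).
Proof.
rewrite /negw uE // size_word num_word zval_m1; apply/word_eqP.
by rewrite modnMml.
Qed.

Lemma taum_word n k : taum (word n k) = word n (k + (2 ^ n - 1)).
Proof.
rewrite /taum tauE size_word num_word zval_m1; apply/word_eqP.
by rewrite modnDml.
Qed.

Lemma negw_inv w : negw (negw w) = w.
Proof.
rewrite -(word_num w) !negw_word; apply/word_eqP.
rewrite -mulnA -[in RHS](muln1 (num w)); apply: eqmM => //; exact: MM.
Qed.

Lemma taum_inv w : tau_act z1 (taum w) = w.
Proof.
rewrite -(word_num w) taum_word tau1_word; apply/word_eqP.
have := pow2_gt0 (size w) => H.
have -> : (num w + (2 ^ size w - 1)).+1 = num w + 1 * 2 ^ size w by lia.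
by rewrite eqm_mulP.
Qed.

Lemma qw_word n k : qw (word n k) = word n (k + 2).
Proof.
rewrite /qw negw_word taum_word negw_word tau1_word; apply/word_eqP.
have HM := MM n; move: HM; set M := 2 ^ n - 1 => HM.
have -> : ((k * M + M) * M).+1 = k * (M * M) + (M * M + 1) by nia.
have -> : k + 2 = k * 1 + (1 + 1) by lia.
apply: eqmD; first by apply: eqmM.
by apply: eqmD.
Qed.

Lemma trans_comm f f' : lin f (fun _ => 1) -> lin f' (fun _ => 1) ->
  forall w, f (f' w) = f' (f w).
Proof.
move=> H H' w; rewrite -(word_num w).
have [D HD] := H (size w); have [D' HD'] := H' (size w).
by rewrite HD HD' HD HD' !mul1n addnAC.
Qed.

Lemma part1_left g : normalizerW Tset g -> Aset g.
Proof.
move=> [HW Hn]; have [gi [K1 K2 Hpgi]] := isW_inv HW.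
set h := fun w => g (tau_act z1 (gi w)).
have Th : Tset h.
  apply/(Hn h); exists (tau_act z1); split; first by exists z1.
  by move=> w; rewrite /mulW /h K1.
apply/Aset_iff; apply: (lemL HW (proj1 (Tset_iff h) Th)).
by move=> w; rewrite /h K1.
Qed.

Lemma part_right (S : tree_set) (P : tree_map -> Prop) g :
  (forall f, S f <-> pref f /\ P f) ->
  (forall f f', (forall w, f w = f' w) -> P f -> P f') ->
  (forall f, P f -> forall w, size (f w) = size w) ->
  (forall gi x, Z2_odd x -> lin g (fun n => zval n x) -> pref g ->
     cancel g gi -> cancel gi g -> pref gi ->
     forall h, pref h -> P h -> P (fun w => gi (h (g w))) /\ P (fun w => g (h (gi w)))) ->
  Aset g -> normalizerW S g.
Proof.
move=> HS Pext Psz Hc /Aset_iff HA.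
have HW := isAs_W HA; have [gi [K1 K2 Hpgi]] := isW_inv HW.
move: HA => [Hpg [x [Hx Hlg]]].
have Sg := lin_sz Hlg.
have Hgi := lin_inv Hlg (fun n => minv_zval n Hx) K2.
have Sgi := lin_sz Hgi.
split => // h; split.
  move=> /HS [Hph HPh].
  exists (fun w => gi (h (g w))); split.
    apply/HS; split; last by case: (Hc gi x Hx Hlg Hpg K1 K2 Hpgi h Hph HPh).
    by apply: pref_comp Hpgi (pref_comp Hph Hpg Sg) _ => w; rewrite (Psz _ HPh) Sg.
  by move=> w; rewrite /mulW K2.
move=> [s [/HS [Hps HPs] E]].
have Eh : forall w, g (s (gi w)) = h w by move=> w; have := E (gi w); rewrite /mulW K2.
apply/HS; split.
  apply: pref_ext Eh _; apply: pref_comp Hpg (pref_comp Hps Hpgi Sgi) _ => w.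
  by rewrite (Psz _ HPs) Sgi.
apply: Pext Eh _; by case: (Hc gi x Hx Hlg Hpg K1 K2 Hpgi s Hps HPs).
Qed.

Lemma part1_right g : Aset g -> normalizerW Tset g.
Proof.
apply: (part_right (P := fun f => lin f (fun _ => 1))).
- by move=> f; apply: Tset_iff.
- by move=> f f' E H; apply: lin_ext E H.
- by move=> f H; apply: lin_sz H.
- move=> gi x Hx Hlg Hpg K1 K2 Hpgi h Hph Hh.
  by case: (conj_closed Hx Hlg Hpg K1 K2 Hpgi Hph Hh).
Qed.

Lemma part2_right g : Aset g -> normalizerW Aset g.
Proof.
apply: (part_right (P := fun f => exists x, Z2_odd x /\ lin f (fun n => zval n x))).
- by move=> f; apply: Aset_iff.
- by move=> f f' E [x [Hx H]]; exists x; split => //; apply: lin_ext E H.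
- by move=> f [x [_ H]]; apply: lin_sz H.
- move=> gi x Hx Hlg Hpg K1 K2 Hpgi h Hph [y [Hy Hh]].
  case: (conj_closed Hx Hlg Hpg K1 K2 Hpgi Hph Hh) => _ H1 _ H2.
  by split; exists y.
Qed.

Lemma Aset_lin f : Aset f -> exists x, lin f (fun n => zval n x).
Proof. by move=> /Aset_iff [_ [x [_ H]]]; exists x. Qed.

Lemma part2_left g : normalizerW Aset g -> Aset g.
Proof.
move=> [HW Hn]; have [gi [K1 K2 Hpgi]] := isW_inv HW.
have Hinj := can_inj K1.
have Atau : Aset (tau_act z1) by apply/Aset_iff; apply: isA_tau.
have Aneg : Aset negw by apply/Aset_iff; apply: isA_u.
have Ataum : Aset taum by apply/Aset_iff; apply: isA_tau.
have [s1 [/Aset_lin [x1 L1] E1]] := proj1 (Hn _) Atau.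
have [s0 [/Aset_lin [x0 L0] E0]] := proj1 (Hn _) Aneg.
have [s3 [/Aset_lin [x3 L3] E3]] := proj1 (Hn _) Ataum.
rewrite /mulW in E1 E0 E3.
have I0 : forall w, s0 (s0 w) = w.
  by move=> w; apply: Hinj; rewrite -!E0 negw_inv.
have I13 : forall w, s1 (s3 w) = w.
  by move=> w; apply: Hinj; rewrite -E1 -E3 taum_inv.
have M0 := lin_id1 (lin_comp L0 L0) I0.
have M13 := lin_id1 (lin_comp L1 L3) I13.
set pi := fun w => s1 (s0 (s3 (s0 w))).
have Lpi : lin pi (fun _ => 1).
  apply: lin_eqm (lin_comp L1 (lin_comp L0 (lin_comp L3 L0))) => n /=.
  have -> : zval n x1 * (zval n x0 * (zval n x3 * zval n x0))
    = (zval n x1 * zval n x3) * (zval n x0 * zval n x0) by lia.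
  by rewrite -(muln1 1); apply: eqmM.
have Gpi : forall w, g (pi w) = qw (g w).
  by move=> w; rewrite /pi /qw -E1 -E0 -E3 -E0.
set h0 := fun w => g (tau_act z1 (gi w)).
have Ah0 : Aset h0.
  apply/(Hn h0); exists (tau_act z1); split => //.
  by move=> w; rewrite /mulW /h0 K1.
have /Aset_iff [Hph0 [xh [_ Lh0]]] := Ah0.
have Q : forall w, qw w = g (pi (gi w)) by move=> w; rewrite Gpi K2.
have C : forall w, h0 (qw w) = qw (h0 w).
  move=> w; rewrite !Q /h0 !K1.
  by rewrite (trans_comm (tau_lin z1) Lpi).
have X1 : forall n, zval n xh = 1 %[mod 2 ^ n].
  move=> n; have [D HD] := Lh0 n.+1.
  have := C (word n.+1 0).
  rewrite qw_word !HD qw_word add0n muln0 add0n => /word_eqP E'.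
  rewrite (addnC D) in E'; move/eqP: E'; rewrite eqn_modDr => /eqP E2.
  have E4 : 2 * (zval n.+1 xh %% 2 ^ n) = 2 * (1 %% 2 ^ n).
    by rewrite !muln_modr muln1 -expnS mulnC.
  move/eqP: E4; rewrite eqn_pmul2l // => /eqP E4.
  by rewrite -E4 val_eqm.
have Th0 : isTs h0.
  by split => //; apply: lin_eqm Lh0 => n; rewrite X1.
apply/Aset_iff; apply: (lemL HW Th0).
by move=> w; rewrite /h0 K1.
Qed.

Theorem theorem4p13 :
  (forall g : tree_map, normalizerW Tset g <-> Aset g) /\
  (forall g : tree_map, normalizerW Aset g <-> Aset g).
Proof.
split => g; split.
- exact: part1_left.
- exact: part1_right.
- exact: part2_left.
- exact: part2_right.
Qed.
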